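(* Let $\epsilon\in(0,1/e]$, $p_v,p_e\in(0,1]$, let $G=(V,E)$ be a graph with nonnegative edge weights $w_e$, and let $\tilde x$ be the values set in step 1 of the non-crucial edge procedure (context). Then $$\mathbb{E}\Big[\sum_{e\in\mathcal{E}_Q\cap N}w_e\,\tilde x_e\Big]\ \ge\ (1-\epsilon)\,\varphi(N),$$ where the expectation is over the randomness of Algorithm 1 and the realization $\mathcal{G}$.
   Context: Realization model: given $p_v,p_e\in(0,1]$ and $G=(V,E)$ with weights $w_e\ge0$, a realization $\mathcal{G}=(\mathcal{V},\mathcal{E})$ keeps each vertex independently with probability $p_v$ and each edge $(u,v)$ independently with probability $p_e$ provided both $u,v$ are kept. Fix a deterministic algorithm computing a maximum-weight matching $M(H)$. $q_e:=\Pr[e\in M(\mathcal{G})]$. For $X\subseteq E$, $\varphi(X):=\sum_{e\in X}w_eq_e$. $\tau=\frac{\epsilon^3p_v^2p_e}{20\log(1/\epsilon)}$, $R=\frac{2000\log(1/\epsilon)\log(1/(\epsilon p_v^2p_e))}{\epsilon^4p_v^2p_e}$. $N=\{e\in E:q_e<\tau\}$. Algorithm 1: for $r=1,\dots,R$ draw an independent realization $\mathcal{G}_r$ and put the edges of $M(\mathcal{G}_r)$ into $Q=(V,E_Q)$; $f_e:=$ (number of $r$ with $e\in M(\mathcal{G}_r)$)$/R$. The realization $\mathcal{G}$ is independent of the algorithm's samples; $\mathcal{E}_Q=E_Q\cap\mathcal{E}$. Step 1 of the non-crucial edge procedure: for $e\in\mathcal{E}_Q\cap N$, $\tilde x_e=\min\{f_e/(p_v^2p_e),\,2\tau/(p_v^2p_e)\}$;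 $\tilde x_e=0$ otherwise. *)

(* Defs.v *)
From HB Require Import structures.
From mathcomp Require Import all_boot all_order all_algebra.
From mathcomp Require Import reals sequences exp.
Set Implicit Arguments. Unset Strict Implicit. Unset Printing Implicit Defensive.
Import Order.TTheory GRing.Theory Num.Theory.
Local Open Scope ring_scope.

(* A graph G = (V,E): V a finite type, E a set of 2-element subsets of V.
   A realization is a pair (vertex set, edge set). *)
Section Model.
Variables (R : realType) (V : finType).

Definition edge := {set V}.
Definition realization := ({set V} * {set edge})%type.

Definition induced_edges (E : {set edge}) (S : {set V}) : {set edge} :=
  [set e in E | e \subset S].

Definition real_prob (pv pe : R) (E : {set edge}) (g : realization) : R :=
  let S := g.1 in let F := g.2 in
  if F \subset induced_edges E S then
    pv ^+ #|S| * (1 - pv) ^+ (#|V| - #|S|)%N *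
    pe ^+ #|F| * (1 - pe) ^+ (#|induced_edges E S| - #|F|)%N
  else 0.

Definition is_matching (F : {set edge}) : Prop :=
  forall e1 e2, e1 \in F -> e2 \in F -> e1 != e2 -> [disjoint e1 & e2].

Definition set_weight (w : edge -> R) (F : {set edge}) : R := \sum_(e in F) w e.

Definition max_weight_matching_alg (E : {set edge}) (w : edge -> R)
    (M : realization -> {set edge}) : Prop :=
  forall g : realization, g.2 \subset induced_edges E g.1 ->
    [/\ M g \subset g.2, is_matching (M g) &
        forall F' : {set edge}, F' \subset g.2 -> is_matching F' ->
          set_weight w F' <= set_weight w (M g)].

Definition q_edge (pv pe : R) (E : {set edge}) (M : realization -> {set edge})
    (e : edge) : R :=
  \sum_(g : realization) real_prob pv pe E g * (e \in M g)%:R.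

Definition tau (eps pv pe : R) : R :=
  eps ^+ 3 * pv ^+ 2 * pe / (20 * ln (1 / eps)).

Definition Rreal (eps pv pe : R) : R :=
  2000 * ln (1 / eps) * ln (1 / (eps * pv ^+ 2 * pe)) /
  (eps ^+ 4 * pv ^+ 2 * pe).

Definition rounds (eps pv pe : R) : nat := `|Num.ceil (Rreal eps pv pe)|%N.

Definition Nset (eps pv pe : R) (E : {set edge}) (M : realization -> {set edge})
  : {set edge} := [set e in E | q_edge pv pe E M e < tau eps pv pe].

Definition f_edge (n : nat) (M : realization -> {set edge})
    (samples : {ffun 'I_n -> realization}) (e : edge) : R :=
  #|[set r : 'I_n | e \in M (samples r)]|%:R / n%:R.

Definition EQ (n : nat) (M : realization -> {set edge})
    (samples : {ffun 'I_n -> realization}) : {set edge} :=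
  \bigcup_(r : 'I_n) M (samples r).

Definition xtilde (eps pv pe : R) (E : {set edge}) (M : realization -> {set edge})
    (samples : {ffun 'I_(rounds eps pv pe) -> realization}) (g : realization)
    (e : edge) : R :=
  if e \in (EQ M samples :&: g.2) :&: Nset eps pv pe E M then
    Num.min (f_edge M samples e / (pv ^+ 2 * pe))
            (2 * tau eps pv pe / (pv ^+ 2 * pe))
  else 0.
Arguments xtilde : clear implicits.
Arguments xtilde eps pv pe E M samples g e.

Definition expected_value (eps pv pe : R) (E : {set edge}) (w : edge -> R)
    (M : realization -> {set edge}) : R :=
  \sum_(samples : {ffun 'I_(rounds eps pv pe) -> realization})
  \sum_(g : realization)
    (\prod_(r : 'I_(rounds eps pv pe)) real_prob pv pe E (samples r)) *
    real_prob pv pe E g *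
    \sum_(e in (EQ M samples :&: g.2) :&: Nset eps pv pe E M)
       w e * xtilde eps pv pe E M samples g e.

Definition phi (pv pe : R) (E : {set edge}) (w : edge -> R)
    (M : realization -> {set edge}) (X : {set edge}) : R :=
  \sum_(e in X) w e * q_edge pv pe E M e.

End Model.

(* Main.v *)
Require Import Defs.
From HB Require Import structures.
From mathcomp Require Import all_boot all_order all_algebra.
From mathcomp Require Import reals sequences exp.
From mathcomp Require Import ring lra.
Import Order.TTheory GRing.Theory Num.Theory.
Local Open Scope ring_scope.
Set Implicit Arguments. Unset Strict Implicit. Unset Printing Implicit Defensive.

Section Gen.
Variable R : realType.

Lemma sum_set_prod (T : finType) (phi : T -> bool -> R) :
  \sum_(F : {set T}) \prod_(x : T) phi x (x \in F) =
  \prod_(x : T) (phi x true + phi x false).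
Proof.
have -> : \prod_(x : T) (phi x true + phi x false) =
          \prod_(x : T) \sum_(b : bool) phi x b.
  by apply: eq_bigr => x _; rewrite big_bool.
rewrite bigA_distr_bigA /=.
rewrite (reindex (fun F : {set T} => [ffun x => x \in F])) /=.
  by apply: eq_bigr => F _; apply: eq_bigr => x _; rewrite ffunE.
exists (fun f : {ffun T -> bool} => [set x | f x]) => [F _|f _].
  by apply/setP => x; rewrite inE ffunE.
by apply/ffunP => x; rewrite ffunE inE.
Qed.

Lemma prod_if_card (T : finType) (S : {set T}) (a b : R) :
  \prod_(x : T) (if x \in S then a else b) = a ^+ #|S| * b ^+ (#|T| - #|S|).
Proof.
rewrite (_ : \prod_(x : T) _ = \prod_(x in [set: T]) (if x \in S then a else b)); last by apply: eq_bigl => x; rewrite inE.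
rewrite (big_setID S) /= setTI setTD.
rewrite (eq_bigr (fun _ => a)); last by move=> x ->.
rewrite [X in _ * X](eq_bigr (fun _ => b)); last by move=> x; rewrite inE => /negbTE ->.
by rewrite !prodr_const [#|~: S|]cardsCs setCK.
Qed.

Lemma prod_edge (T : finType) (I F : {set T}) (a c : R) :
  \prod_(x : T) (if x \in I then (if x \in F then a else c)
                 else (if x \in F then 0 else 1)) =
  if F \subset I then a ^+ #|F| * c ^+ (#|I| - #|F|) else 0.
Proof.
case: ifP => [sFI|nsFI].
  rewrite (bigID (mem I)) /=.
  rewrite [X in _ * X]big1 ?mulr1; last first.
    move=> x /negbTE xI; rewrite xI.
    by case: ifP => // xF; move: (subsetP sFI x xF); rewrite xI.
  rewrite (big_setID F) /=.
  rewrite (eq_bigr (fun _ => a)); last by move=> x; rewrite inE => /andP [-> ->].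
  rewrite [X in _ * X](eq_bigr (fun _ => c)); last first.
    by move=> x; rewrite inE => /andP [/negbTE -> ->].
  by rewrite !prodr_const cardsD (setIidPr sFI).
have [x xF xI] := subsetPn (negbT nsFI).
by rewrite (bigD1 x) //= (negbTE xI) xF mul0r.
Qed.

End Gen.

Section Real.
Variables (R : realType) (V : finType) (E : {set {set V}}) (pv pe : R).

Definition bern (a : R) (b : bool) : R := if b then a else 1 - a.
Definition epsi (I : {set {set V}}) (y : {set V}) (b : bool) : R :=
  if y \in I then bern pe b else (if b then 0 else 1).

Lemma real_prob_prod (S : {set V}) (F : {set {set V}}) :
  real_prob pv pe E (S, F) =
  (\prod_(x : V) bern pv (x \in S)) *
  \prod_(y : {set V}) epsi (induced_edges E S) y (y \in F).
Proof.
have -> : \prod_(x : V) bern pv (x \in S) = \prod_(x : V) (if x \in S then pv else 1 - pv).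
  by apply: eq_bigr => x _; rewrite /bern; case: (x \in S).
rewrite prod_if_card.
have -> : \prod_(y : {set V}) epsi (induced_edges E S) y (y \in F) =
  \prod_(y : {set V}) (if y \in induced_edges E S then (if y \in F then pe else 1 - pe)
                 else (if y \in F then 0 else 1)).
  by apply: eq_bigr => y _; rewrite /epsi /bern; case: (y \in F).
rewrite prod_edge /real_prob /=.
by case: ifP; rewrite ?mulr0 // !mulrA.
Qed.

Lemma prod_indic (e S : {set V}) :
  \prod_(x : V) (if x \in e then (x \in S)%:R else 1) = (e \subset S)%:R :> R.
Proof.
case: (boolP (e \subset S)) => [sES|nsES].
  by apply: big1 => x _; case: ifP => // xe; rewrite (subsetP sES x xe).
have [x xe xS] := subsetPn nsES.
by rewrite (bigD1 x) //= xe (negbTE xS) mul0r.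
Qed.

Lemma prod_pred1 (T : finType) (e : T) (G : T -> R) :
  \prod_(y : T) (if y == e then G y else 1) = G e.
Proof. by rewrite -big_mkcond big_pred1_eq. Qed.

Lemma bern_sum a : bern a true + bern a false = 1.
Proof. by rewrite /bern addrC subrK. Qed.

Lemma epsi_sum I y : epsi I y true + epsi I y false = 1.
Proof. by rewrite /epsi; case: ifP => _; rewrite ?bern_sum ?add0r. Qed.

Lemma sum_pairs (G : realization V -> R) :
  \sum_(g : realization V) G g = \sum_(S : {set V}) \sum_(F : {set {set V}}) G (S, F).
Proof. by rewrite pair_bigA; apply: eq_bigr => -[]. Qed.

Lemma sum_real_prob : \sum_(g : realization V) real_prob pv pe E g = 1.
Proof.
rewrite sum_pairs.
transitivity (\sum_(S : {set V}) \prod_(x : V) bern pv (x \in S)).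
  apply: eq_bigr => S _.
  rewrite (eq_bigr _ (fun F _ => real_prob_prod S F)).
  rewrite -mulr_sumr sum_set_prod.
  by rewrite [X in _ * X](eq_bigr (fun _ => 1)) ?prodr_const ?expr1n ?mulr1 // => y _; rewrite epsi_sum.
rewrite (sum_set_prod (fun x b => bern pv b)).
by rewrite (eq_bigr (fun _ => 1)) ?prodr_const ?expr1n // => y _; rewrite bern_sum.
Qed.

Lemma edge_prob (e : {set V}) : e \in E -> #|e| = 2%N ->
  \sum_(g : realization V) real_prob pv pe E g * (e \in g.2)%:R = pv ^+ 2 * pe.
Proof.
move=> eE ce.
rewrite sum_pairs.
transitivity (\sum_(S : {set V}) \prod_(x : V) (bern pv (x \in S) *
    (if x \in e then (x \in S)%:R else 1)) * pe).
  apply: eq_bigr => S _.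
  rewrite (eq_bigr _ (fun F _ => congr1 (fun z => z * _) (real_prob_prod S F))).
  under eq_bigr => F _ do rewrite /= -mulrA -[(e \in F)%:R](prod_pred1 e (fun y => (y \in F)%:R)) -big_split /=.
  rewrite -mulr_sumr.
  rewrite (sum_set_prod (fun y b => epsi (induced_edges E S) y b * (if y == e then b%:R else 1))).
  rewrite (eq_bigr (fun y => if y == e then epsi (induced_edges E S) y true else 1)); last first.
    by move=> y _; case: eqP => _; rewrite ?mulr1 ?mulr0 ?addr0 ?epsi_sum.
  rewrite prod_pred1 big_split /= prod_indic /epsi /bern inE eE /=.
  by case: (e \subset S); rewrite ?mulr1 ?mulr0 ?mul0r.
rewrite -mulr_suml (sum_set_prod (fun x b => bern pv b * (if x \in e then b%:R else 1))).
rewrite (eq_bigr (fun x => if x \in e then pv else 1)); last first.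
  by move=> x _; rewrite /bern; case: ifP => _; rewrite ?mulr1 ?mulr0 ?addr0 // addrC subrK.
by rewrite (prod_if_card e pv 1) ce expr1n mulr1.
Qed.

Lemma bern_ge0 a b : 0 <= a <= 1 -> 0 <= bern a b.
Proof. by case/andP=> a0 a1; rewrite /bern; case: b; rewrite ?subr_ge0. Qed.

Lemma real_prob_ge0 g : 0 <= pv <= 1 -> 0 <= pe <= 1 -> 0 <= real_prob pv pe E g.
Proof.
move=> hv he; case: g => S F; rewrite real_prob_prod.
apply: mulr_ge0; apply: prodr_ge0 => x _; first exact: bern_ge0.
by rewrite /epsi; case: ifP => _; [exact: bern_ge0| case: (x \in F)].
Qed.

End Real.

Section Samp.
Variables (R : realType) (T : finType) (P X : T -> R) (n : nat).
Hypothesis P1 : \sum_t P t = 1.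

Definition Ps (I : finType) (s : {ffun I -> T}) := \prod_(r : I) P (s r).

Lemma prod_sum (I : finType) (F : I -> T -> R) :
  \sum_(s : {ffun I -> T}) \prod_(i : I) F i (s i) = \prod_(i : I) \sum_(t : T) F i t.
Proof. by rewrite bigA_distr_bigA. Qed.

Lemma Ps_sum (I : finType) : \sum_(s : {ffun I -> T}) Ps s = 1.
Proof.
rewrite /Ps (prod_sum (fun _ => P)) (eq_bigr (fun _ => 1)) ?prodr_const ?expr1n // => i _.
Qed.

Lemma marg1 (I : finType) (r : I) (h : T -> R) :
  \sum_(s : {ffun I -> T}) Ps s * h (s r) = \sum_t P t * h t.
Proof.
transitivity (\sum_(s : {ffun I -> T}) \prod_(j : I) (P (s j) * (if j == r then h (s j) else 1))).
  apply: eq_bigr => s _; rewrite big_split /= prod_pred1 //.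
rewrite (prod_sum (fun j t => P t * (if j == r then h t else 1))).
rewrite (eq_bigr (fun j => if j == r then \sum_t P t * h t else 1)); first by rewrite prod_pred1.
move=> j _; case: eqP => _ //.
by rewrite (eq_bigr P) // => t _; rewrite mulr1.
Qed.

Lemma marg2 (I : finType) (r r' : I) (h k : T -> R) : r != r' ->
  \sum_(s : {ffun I -> T}) Ps s * (h (s r) * k (s r')) =
  (\sum_t P t * h t) * (\sum_t P t * k t).
Proof.
move=> rr'.
transitivity (\sum_(s : {ffun I -> T}) \prod_(j : I) (P (s j) *
   ((if j == r then h (s j) else 1) * (if j == r' then k (s j) else 1)))).
  by apply: eq_bigr => s _; rewrite big_split /= big_split /= !prod_pred1.
rewrite (prod_sum (fun j t => P t * ((if j == r then h t else 1) * (if j == r' then k t else 1)))).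
rewrite (eq_bigr (fun j => (if j == r then \sum_t P t * h t else 1) *
                           (if j == r' then \sum_t P t * k t else 1))).
  by rewrite big_split /= !prod_pred1.
move=> j _; case: (eqVneq j r) => [->|jr].
  rewrite (negbTE rr') mulr1; apply: eq_bigr => t _; by rewrite mulr1.
case: eqP => _; rewrite mul1r.
  by apply: eq_bigr => t _; rewrite mul1r.
by rewrite (eq_bigr P) // => t _; rewrite !mulr1.
Qed.

End Samp.

Section Var.
Variables (R : realType) (T : finType) (P X : T -> R) (n : nat).
Hypothesis P1 : \sum_t P t = 1.
Hypothesis X01 : forall t, X t * X t = X t.
Hypothesis n0 : (0 < n)%N.

Let q := \sum_t P t * X t.
Definition fs (s : {ffun 'I_n -> T}) : R := (\sum_r X (s r)) / n%:R.

Lemma nR0 : n%:R != 0 :> R.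
Proof. by rewrite pnatr_eq0 -lt0n. Qed.

Lemma mean_fs : \sum_(s : {ffun 'I_n -> T}) Ps P s * fs s = q.
Proof.
rewrite /fs.
under eq_bigr => s _ do rewrite mulrA mulr_sumr.
rewrite -mulr_suml exchange_big /=.
under eq_bigr => r _ do rewrite (marg1 P1).
by rewrite sumr_const card_ord -[_ *+ n]mulr_natr mulfK ?nR0.
Qed.

Lemma sumPY : \sum_t P t * (X t - q) = 0.
Proof.
under eq_bigr => t _ do rewrite mulrBr.
by rewrite sumrB -mulr_suml P1 mul1r subrr.
Qed.

Lemma sumPY2 : \sum_t P t * (X t - q) ^+ 2 = q - q ^+ 2.
Proof.
transitivity (\sum_t (P t * X t * (1 - 2 * q) + P t * q ^+ 2)).
  apply: eq_bigr => t _.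
  rewrite sqrrB expr2 X01.
  rewrite -mulr_natr.
  ring.
rewrite big_split /= -!mulr_suml P1 mul1r -/q.
ring.
Qed.

Lemma var_fs : \sum_(s : {ffun 'I_n -> T}) Ps P s * (fs s - q) ^+ 2 <= q / n%:R.
Proof.
have Hf : forall s, fs s - q = (\sum_r (X (s r) - q)) / n%:R.
  move=> s; rewrite /fs sumrB sumr_const card_ord mulrBl.
  by rewrite -[q *+ n]mulr_natr mulfK // nR0.
pose Y t := X t - q.
have E1 : forall s : {ffun 'I_n -> T}, Ps P s * (fs s - q) ^+ 2 =
   \sum_r \sum_r' Ps P s * (Y (s r) * Y (s r')) / n%:R ^+ 2.
  move=> s; rewrite Hf exprMn expr2 big_distrlr /= mulr_suml mulr_sumr.
  apply: eq_bigr => r _; rewrite mulr_suml mulr_sumr; apply: eq_bigr => r' _.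
  by rewrite /Y exprVn !mulrA.
rewrite (eq_bigr _ (fun s _ => E1 s)) exchange_big /=.
have E2 : forall r : 'I_n, \sum_(s : {ffun 'I_n -> T}) \sum_r' Ps P s * (Y (s r) * Y (s r')) / n%:R ^+ 2
   = (q - q ^+ 2) / n%:R ^+ 2.
  move=> r; rewrite exchange_big /= (bigD1 r) //= [X in _ + X]big1 ?addr0.
    rewrite -mulr_suml; congr (_ * _).
    rewrite (marg1 P1 r (fun t => Y t * Y t)) -sumPY2.
    by apply: eq_bigr => t _; rewrite expr2.
  move=> r' r'r; rewrite -mulr_suml (@marg2 _ _ _ P1 _ r r' Y Y); last by rewrite eq_sym.
  by rewrite /Y sumPY mul0r mul0r.
rewrite (eq_bigr _ (fun r _ => E2 r)) sumr_const card_ord.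
rewrite -[_ *+ n]mulr_natr expr2 invfM !mulrA divfK ?nR0 //.
apply: ler_wpM2r; first by rewrite invr_ge0 ler0n.
by rewrite gerDl oppr_le0 -expr2 sqr_ge0.
Qed.


Lemma min_lb (f t : R) : 0 < t -> q < t ->
  f - (f - q) ^+ 2 / t <= Num.min f (2 * t).
Proof.
move=> t0 qt.
set d := (f - q) ^+ 2 / t.
have hd : d * t = (f - q) ^+ 2 by rewrite /d divfK // gt_eqF.
have d0 : 0 <= d by rewrite /d divr_ge0 ?sqr_ge0 // ltW.
rewrite le_min; apply/andP; split; first by lra.
case: (lerP f (2 * t)) => hf; first by lra.
nra.
Qed.

Hypothesis P0 : forall t, 0 <= P t.

Lemma Emin (t : R) : 0 < t -> q < t ->
  q - q / (n%:R * t) <= \sum_(s : {ffun 'I_n -> T}) Ps P s * Num.min (fs s) (2 * t).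
Proof.
move=> t0 qt.
have Ps0 : forall s : {ffun 'I_n -> T}, 0 <= Ps P s.
  by move=> s; apply: prodr_ge0 => r _; exact: P0.
apply: le_trans (_ : \sum_(s : {ffun 'I_n -> T}) Ps P s * (fs s - (fs s - q) ^+ 2 / t) <= _).
  under eq_bigr => s _ do rewrite mulrBr.
  rewrite sumrB mean_fs.
  rewrite lerD2l lerN2.
  under eq_bigr => s _ do rewrite mulrA.
  rewrite -mulr_suml invfM mulrA.
  apply: ler_wpM2r; first by rewrite invr_ge0 ltW.
  exact: var_fs.
apply: ler_sum => s _; apply: ler_wpM2l => //; exact: min_lb.
Qed.

End Var.

Section Num.
Variables (R : realType) (eps pv pe : R).
Hypotheses (e0 : 0 < eps) (e1 : eps <= expR (-1)) (v0 : 0 < pv) (v1 : pv <= 1)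
  (p0 : 0 < pe) (p1 : pe <= 1).

Lemma ln_ge1 (x : R) : x <= expR (-1) -> 0 < x -> 1 <= ln (1 / x).
Proof.
move=> hx x0.
have h1 : expR 1 <= 1 / x.
  rewrite div1r -[expR 1]invrK; rewrite lef_pV2 ?posrE ?invr_gt0 ?expR_gt0 //.
  by rewrite -expRN.
rewrite -[X in X <= _](expRK 1) ler_ln ?posrE ?expR_gt0 ?divr_gt0 //.
Qed.

Lemma c_pos : 0 < pv ^+ 2 * pe.
Proof. by rewrite mulr_gt0 // exprn_gt0. Qed.

Lemma c_le1 : pv ^+ 2 * pe <= 1.
Proof. apply: mulr_ile1; [exact: exprn_ge0 (ltW v0) | exact: ltW p0 | exact: exprn_ile1 (ltW v0) v1 | exact: p1]. Qed.

Lemma numerics :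
  [/\ 0 < tau eps pv pe, (0 < rounds eps pv pe)%N &
      1 <= eps * ((rounds eps pv pe)%:R * tau eps pv pe)].
Proof.
set c := pv ^+ 2 * pe.
have c0 : 0 < c := c_pos. have c1 : c <= 1 := c_le1.
have a1 : 1 <= ln (1 / eps) := ln_ge1 e1 e0.
have ec1 : eps * c <= expR (-1).
  apply: le_trans e1; rewrite ger_pMr //.
have L1 : 1 <= ln (1 / (eps * pv ^+ 2 * pe)) by rewrite -mulrA; apply: ln_ge1 => //; rewrite mulr_gt0.
have t0 : 0 < tau eps pv pe.
  rewrite /tau -/c divr_gt0 ?mulr_gt0 ?exprn_gt0 //.
  by apply: lt_le_trans a1.
have Rr : eps * (Rreal eps pv pe * tau eps pv pe) = 100 * ln (1 / (eps * pv ^+ 2 * pe)).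
  rewrite /Rreal /tau.
  have ea : ln (1 / eps) != 0 by rewrite gt_eqF // (lt_le_trans _ a1).
  have e0' : eps != 0 by rewrite gt_eqF.
  have v0' : pv != 0 by rewrite gt_eqF.
  have p0' : pe != 0 by rewrite gt_eqF.
  field.
  by rewrite ea e0' v0' p0'.
have Rge : Rreal eps pv pe <= (rounds eps pv pe)%:R.
  rewrite /rounds natr_absz.
  apply: le_trans (ceil_ge _) _.
  by rewrite ler_int ler_norm.
have R0 : 0 < Rreal eps pv pe.
  have a0 : 0 < ln (1 / eps) := lt_le_trans ltr01 a1.
  have L0 : 0 < ln (1 / (eps * pv ^+ 2 * pe)) := lt_le_trans ltr01 L1.
  by rewrite /Rreal divr_gt0 // ?mulr_gt0 // exprn_gt0.
split => //.
  by rewrite -(ltr0n R); apply: lt_le_trans Rge.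
apply: le_trans (_ : eps * (Rreal eps pv pe * tau eps pv pe) <= _).
  by rewrite Rr; lra.
by rewrite ler_pM2l // ler_pM2r.
Qed.

End Num.

Lemma f_edge_fs (R : realType) (V : finType) (n : nat)
  (M : realization V -> {set {set V}}) (s : {ffun 'I_n -> realization V}) (e : {set V}) :
  f_edge R M s e = fs (fun g => (e \in M g)%:R) s.
Proof.
rewrite /f_edge /fs; congr (_ / _).
rewrite -sum1_card natr_sum big_mkcond /=; apply: eq_bigr => r _.
by rewrite inE; case: (e \in M (s r)).
Qed.

Lemma f_edge_EQ (R : realType) (V : finType) (n : nat)
  (M : realization V -> {set {set V}}) (s : {ffun 'I_n -> realization V}) (e : {set V}) :
  e \notin EQ M s -> f_edge R M s e = 0.
Proof.
move=> eQ; rewrite /f_edge.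
suff -> : [set r : 'I_n | e \in M (s r)] = set0 by rewrite cards0 mul0r.
apply/setP => r; rewrite !inE; apply/negP => er.
by move/negP: eQ; apply; apply/bigcupP; exists r.
Qed.

Lemma min_div (R : realType) (a b c : R) : 0 < c ->
  Num.min (a / c) (b / c) * c = Num.min a b.
Proof.
move=> c0; case: (lerP a b) => h.
  rewrite min_l ?divfK ?gt_eqF // ?min_l //.
  by rewrite ler_wpM2r // invr_ge0 ltW.
rewrite min_r ?divfK ?gt_eqF // ?min_r ?ltW //.
  by rewrite ltr_pM2r ?invr_gt0.

Qed.

Theorem mainTheorem7 (R : realType) (V : finType) (E : {set {set V}})
    (w : {set V} -> R) (M : (({set V} * {set {set V}})%type) -> {set {set V}})
    (eps pv pe : R) :
  0 < eps -> eps <= expR (-1) ->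
  0 < pv -> pv <= 1 -> 0 < pe -> pe <= 1 ->
  (forall e, e \in E -> #|e| = 2%N) ->
  (forall e, e \in E -> 0 <= w e) ->
  max_weight_matching_alg E w M ->
  expected_value eps pv pe E w M >=
    (1 - eps) * phi pv pe E w M (Nset eps pv pe E M).
Proof.
move=> e0 e1 v0 v1 p0 p1 E2 w0 _.
have [t0 n0 nt] := numerics e0 e1 v0 v1 p0 p1.
have c0 := c_pos v0 p0.
set n := rounds eps pv pe in n0 nt *.
set t := tau eps pv pe in t0 nt *.
set c := pv ^+ 2 * pe in c0 *.
set N := Nset eps pv pe E M.
have P0 : forall g, 0 <= real_prob pv pe E g.
  by move=> g; apply: real_prob_ge0; apply/andP; split => //; exact: ltW.
have P1 : \sum_g real_prob pv pe E g = 1 by rewrite sum_real_prob.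
pose m (s : {ffun 'I_n -> realization V}) e := Num.min (f_edge R M s e / c) (2 * t / c).
have Hin : forall s g, \sum_(e in (EQ M s :&: g.2) :&: N) w e * @xtilde R V eps pv pe E M s g e
    = \sum_(e in N) w e * (e \in g.2)%:R * m s e.
  move=> s g; rewrite big_mkcond [RHS]big_mkcond; apply: eq_bigr => e _.
  rewrite /xtilde -/n -/t -/c -/N.
  rewrite !in_setI.
  case: (boolP (e \in N)) => eN; rewrite ?andbF ?andbT //.
  case: (boolP (e \in g.2)) => eg; rewrite ?andbF ?andbT ?mulr0 ?mul0r ?mulr1 //.
  case: (boolP (e \in EQ M s)) => eQ //=.
  by rewrite /m f_edge_EQ // mul0r min_l ?mulr0 // divr_ge0 ?ltW // mulr_gt0.
have H2 : expected_value eps pv pe E w M =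
    \sum_(e in N) w e * (\sum_(s : {ffun 'I_n -> realization V}) Ps (real_prob pv pe E) s * m s e) * c.
  rewrite /expected_value.
  transitivity (\sum_(s : {ffun 'I_n -> realization V}) \sum_(g : realization V)
      \sum_(e in N) (w e * m s e * Ps (real_prob pv pe E) s) * (real_prob pv pe E g * (e \in g.2)%:R)).
    apply: eq_bigr => s _; apply: eq_bigr => g _.
    rewrite (Hin s g) mulr_sumr; apply: eq_bigr => e _.
    rewrite /Ps; ring.
  under eq_bigr => s _ do rewrite exchange_big /=.
  rewrite exchange_big /=; apply: eq_bigr => e eN.
  move: eN; rewrite inE => /andP [eE _].
  under eq_bigr => s _ do rewrite -mulr_sumr (edge_prob pv pe eE (E2 e eE)) -/c.
  by rewrite -!mulr_suml mulr_sumr; congr (_ * _); apply: eq_bigr => s _; ring.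
rewrite H2 /phi mulr_sumr; apply: ler_sum => e eN.
move: eN; rewrite inE => /andP [eE qt].
pose X (g : realization V) : R := (e \in M g)%:R.
have X01 : forall g, X g * X g = X g by move=> g; rewrite /X; case: (e \in M g); rewrite ?mulr1 ?mulr0.
have HE : (\sum_(s : {ffun 'I_n -> realization V}) Ps (real_prob pv pe E) s * m s e) * c =
    \sum_(s : {ffun 'I_n -> realization V}) Ps (real_prob pv pe E) s * Num.min (fs X s) (2 * t).
  rewrite mulr_suml; apply: eq_bigr => s _.
  by rewrite -mulrA /m min_div // f_edge_fs.
rewrite -mulrA HE.
have Em := Emin P1 X01 n0 P0 t0 qt.
set q := q_edge pv pe E M e in qt *.
have Hq : \sum_t real_prob pv pe E t * X t = q by [].
rewrite Hq in Em.
set Ex := \sum_s _ in Em *.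
have q0 : 0 <= q by apply: sumr_ge0 => g _; apply: mulr_ge0 => //; rewrite /X ler0n.
have hq : q / (n%:R * t) <= eps * q.
  have nt0 : 0 < n%:R * t by rewrite mulr_gt0 // ltr0n.
  rewrite ler_pdivrMr //; nra.
have we := w0 e eE.
nra.
Qed.
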